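(* Consider the mixed support-set model described in the context, and let $\mathsf p,\mathsf q_1,\dots,\mathsf q_h,\mathsf r_1,\dots,\mathsf r_m$ be $1+h+m$ distinct sensors. Then (whenever the conditioning event has positive probability) $\Pr\Big(i\in\mathcal T_{\mathsf p}\ \Big|\ i\in\hat{\mathcal T}_{\mathsf p},\ i\in\bigcap_{l=1}^{h}\hat{\mathcal T}_{\mathsf q_l},\ i\in\bigcap_{l=1}^{m}\hat{\mathcal T}_{\mathsf r_l}^{\complement}\Big)$ equals, writing $\phi=\frac{T}{N-T}\epsilon$, $$\frac{(1-\epsilon)^{h+1}\epsilon^{m}\frac{J}{N}+(1-\epsilon)\phi^{h}(1-\phi)^{m}\frac{I}{N}}{(1-\epsilon)^{h+1}\epsilon^{m}\frac{J}{N}+(h+1)(1-\epsilon)\phi^{h}(1-\phi)^{m}\frac{I}{N}+m\,\epsilon\,\phi^{h+1}(1-\phi)^{m-1}\frac{I}{N}+\phi^{h+1}(1-\phi)^{m}\frac{N-J-(m+h+1)I}{N}}.$$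
   Context: Let $N>T\ge1$ be integers and $\Omega=\{1,\dots,N\}$; complements are taken in $\Omega$. A finite set $\mathcal L$ of sensors is given. Mixed support-set model: there are a fixed set $\mathcal J\subseteq\Omega$ with $|\mathcal J|=J$ and, for each sensor $\mathsf p\in\mathcal L$, a fixed set $\mathcal I_{\mathsf p}\subseteq\Omega$ with $|\mathcal I_{\mathsf p}|=I$, such that $\mathcal I_{\mathsf p}\cap\mathcal J=\emptyset$ for all $\mathsf p$, $\mathcal I_{\mathsf p}\cap\mathcal I_{\mathsf q}=\emptyset$ for $\mathsf p\ne\mathsf q$, and the true support set of sensor $\mathsf p$ is $\mathcal T_{\mathsf p}=\mathcal I_{\mathsf p}\cup\mathcal J$; thus $T=I+J$. Each sensor has a random estimated support set $\hat{\mathcal T}_{\mathsf p}\subseteq\Omega$. A random index $i$ is uniformly distributed on $\Omega$ and independent of all estimates. System model: there is $\epsilon$ with $0\le\epsilon\le (N-T)/N$, common to all sensors, such that for every sensor $\mathsf p$ and every $j\in\Omega$, $\Pr(j\in\hat{\mathcal T}_{\mathsf p})=1-\epsilon$ if $j\in\mathcal T_{\mathsf p}$ and $\Pr(j\in\hat{\mathcal T}_{\mathsf p})=\frac{T}{N-T}\epsilon$ if $j\notin\mathcal T_{\mathsf p}$ (so $\Pr(i\in\hat{\mathcal T}_{\mathsf p})=T/N$, detection probability $1-\epsilon$, miss probability $\epsilon$, false-alarm probability $\frac{T}{N-T}\epsilon$). For each fixed $j\in\Omega$, the events $\{j\in\hat{\mathcal T}_{\mathsf p}\}$, $\mathsf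 p\in\mathcal L$, are mutually independent. Convention: $0^0=1$ and a term with coefficient $0$ is $0$. *)

(* Defs.v *)
From HB Require Import structures.
From mathcomp Require Import all_boot all_order all_algebra.
From mathcomp Require Import all_classical all_reals all_analysis.
Set Implicit Arguments. Unset Strict Implicit. Unset Printing Implicit Defensive.
Import Order.TTheory GRing.Theory Num.Theory.
Local Open Scope classical_set_scope.
Local Open Scope ring_scope.

Definition prob (d : measure_display) (Omega : measurableType d) (R : realType)
  (P : probability Omega R) (A : set Omega) : R := fine (P A).

Definition cond_prob (d : measure_display) (Omega : measurableType d) (R : realType)
  (P : probability Omega R) (A B : set Omega) : R :=
  prob P (A `&` B) / prob P B.

Definition mutually_independent (d : measure_display) (Omega : measurableType d)
  (R : realType) (P : probability Omega R) (K : finType) (E : K -> set Omega) : Prop :=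
  forall S : {set K},
    prob P [set w | forall k, k \in S -> E k w] = \prod_(k in S) prob P (E k).

(* Main.v *)
Require Import Defs.
From HB Require Import structures.
From mathcomp Require Import all_boot all_order all_algebra.
From mathcomp Require Import all_classical all_reals all_analysis.
From mathcomp Require Import ring lra.
Import Order.TTheory GRing.Theory Num.Theory.
Local Open Scope classical_set_scope.
Local Open Scope ring_scope.

Section Fin.
Context (d : measure_display) (Omega : measurableType d) (R : realType)
  (P : probability Omega R).

Lemma prob_ext (b1 b2 : Omega -> bool) : (forall w, b1 w = b2 w) ->
  prob P [set w | b1 w] = prob P [set w | b2 w].
Proof. by move=> e; congr (prob P _); apply/funext=> w /=; rewrite e. Qed.

Variables (Y : finType) (Z : Omega -> Y).
Hypothesis hZ : forall y, measurable [set w | Z w = y].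

Lemma pre_seq (s : seq Y) : uniq s ->
  measurable [set w | Z w \in s] /\
  prob P [set w | Z w \in s] = \sum_(y <- s) prob P [set w | Z w = y].
Proof.
elim: s => [|y s IH] /=.
  have -> : [set w | Z w \in [::]] = set0.
    by apply/seteqP; split=> w //=; rewrite in_nil.
  by split; [exact: measurable0 | rewrite /prob measure0 big_nil].
move=> /andP[ys us]; have [ms es] := IH us.
have -> : [set w | Z w \in y :: s] = [set w | Z w = y] `|` [set w | Z w \in s].
  apply/funext=> w /=; apply/propext; rewrite in_cons; split.
    by case/orP=> [/eqP ->|]; [left|right].
  by case=> [->|->]; rewrite ?eqxx ?orbT.
split; first exact: measurableU.
rewrite /prob measureU //; last first.
  apply/seteqP; split=> w //= -[Zy Zs].
  by move: ys; rewrite -Zy Zs.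
rewrite fineD ?inE ?fin_num_measure // big_cons -es //.
Qed.

Lemma meas_pred (A : pred Y) : measurable [set w | A (Z w)].
Proof.
have -> : [set w | A (Z w)] = [set w | Z w \in [seq y <- index_enum Y | A y]].
  by apply/funext=> w /=; rewrite mem_filter mem_index_enum andbT.
by have [mm _] := pre_seq _ (filter_uniq A (index_enum_uniq Y)).
Qed.

Lemma prob_pred (A : pred Y) :
  prob P [set w | A (Z w)] = \sum_(y | A y) prob P [set w | Z w = y].
Proof.
have -> : [set w | A (Z w)] = [set w | Z w \in [seq y <- index_enum Y | A y]].
  by apply/funext=> w /=; rewrite mem_filter mem_index_enum andbT.
have [_ ->] := pre_seq _ (filter_uniq A (index_enum_uniq Y)).
by rewrite big_filter.
Qed.

Lemma prob_split (A B : pred Y) :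
  prob P [set w | A (Z w)] =
  prob P [set w | A (Z w) && B (Z w)] + prob P [set w | A (Z w) && ~~ B (Z w)].
Proof.
rewrite (prob_pred A) (prob_pred (fun y => A y && B y))
  (prob_pred (fun y => A y && ~~ B y)).
by rewrite (bigID B).
Qed.


Lemma forall_setD1 (K : finType) (T : {set K}) k (F : pred K) : k \in T ->
  [forall (x | x \in T), F x] = F k && [forall (x | x \in (T :\ k)%SET), F x].
Proof.
move=> kT; apply/forall_inP/andP.
  move=> H; split; first exact: H.
  by apply/forall_inP=> x; rewrite !inE => /andP[_ /H].
case=> Fk /forall_inP H x xT; case: (eqVneq x k) => [->//|xk].
by apply: H; rewrite !inE xk.
Qed.

Lemma forall_setU1 (K : finType) (S : {set K}) k (F : pred K) :
  [forall (x | x \in (k |: S)%SET), F x] = F k && [forall (x | x \in S), F x].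
Proof.
apply/forall_inP/andP.
  move=> H; split; first by apply: H; rewrite !inE eqxx.
  by apply/forall_inP=> x xS; apply: H; rewrite !inE xS orbT.
case=> Fk /forall_inP H x; rewrite !inE => /orP[/eqP->//|]; exact: H.
Qed.

Variables (K : finType) (Q : K -> pred Y).
Hypothesis hind : forall S : {set K},
  prob P [set w | [forall (k | k \in S), Q k (Z w)]] =
  \prod_(k in S) prob P [set w | Q k (Z w)].

Lemma indep_compl n : forall S T : {set K}, #|T| = n -> [disjoint S & T]%B ->
  prob P [set w | [forall (k | k \in S), Q k (Z w)] &&
                  [forall (k | k \in T), ~~ Q k (Z w)]] =
  \prod_(k in S) prob P [set w | Q k (Z w)] *
  \prod_(k in T) (1 - prob P [set w | Q k (Z w)]).
Proof.
elim: n => [|n IH] S T cT dST.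
  rewrite (cards0_eq cT) big_set0 mulr1 -hind.
  apply: prob_ext => w.
  have H0 : [forall (x | x \in (finset.set0 : {set K})), ~~ Q x (Z w)].
    by apply/forall_inP => x; rewrite inE.
  by rewrite H0 andbT.
have /set0Pn [k kT] : T != finset.set0 by rewrite -card_gt0 cT.
have kS : k \notin S by move: dST; rewrite disjoint_sym => /disjointFr ->.
have cT' : #|(T :\ k)%SET| = n by move: cT; rewrite (cardsD1 k T) kT => -[].
have dST' : [disjoint S & (T :\ k)%SET]%B.
  by apply: disjointWr dST; apply: subD1set.
have dST'' : [disjoint (k |: S)%SET & (T :\ k)%SET]%B.
  rewrite finset.disjoints_subset; apply/fintype.subsetP => x; rewrite !inE.
  case/orP=> [/eqP->|xS]; first by rewrite eqxx.
  move: dST; rewrite finset.disjoints_subset => /fintype.subsetP/(_ x xS).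
  by rewrite inE => /negbTE ->; rewrite andbF.
rewrite (big_setD1 k kT) /=.
have e1 := IH S _ cT' dST'.
have e2 := IH ((k |: S)%SET) _ cT' dST''.
have e3 := prob_split (fun y => [forall (x | x \in S), Q x y] &&
                  [forall (x | x \in (T :\ k)%SET), ~~ Q x y]) (Q k).
simpl in e3.
rewrite (big_setU1 _ kS) /= in e2.
have e4 : prob P [set w | ([forall (x | x \in S), Q x (Z w)] &&
            [forall (x | x \in (T :\ k)%SET), ~~ Q x (Z w)]) && Q k (Z w)] =
          prob P [set w | [forall (x | x \in (k |: S)%SET), Q x (Z w)] &&
            [forall (x | x \in (T :\ k)%SET), ~~ Q x (Z w)]].
  apply: prob_ext => w.
  by rewrite forall_setU1; case: (Q k (Z w)); rewrite ?andbT ?andbF.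
have -> : prob P [set w | [forall (x | x \in S), Q x (Z w)] &&
            [forall (x | x \in T), ~~ Q x (Z w)]] =
  prob P [set w | ([forall (x | x \in S), Q x (Z w)] &&
            [forall (x | x \in (T :\ k)%SET), ~~ Q x (Z w)]) && ~~ Q k (Z w)].
  apply: prob_ext => w; rewrite (@forall_setD1 _ T k (fun x => ~~ Q x (Z w)) kT).
  by case: (Q k (Z w)); rewrite ?andbT ?andbF.
move: e3; rewrite e4 e1 e2 => e3.
apply: (addrI (prob P [set w | Q k (Z w)] *
   \prod_(i in S) prob P [set w | Q i (Z w)] *
    \prod_(i in (T :\ k)%SET) (1 - prob P [set w | Q i (Z w)]))).
rewrite -e3; ring.
Qed.

End Fin.


Lemma prod_constI (R : comRingType) n (x : R) : \prod_(l < n) x = x ^+ n.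
Proof. by rewrite prodr_const card_ord. Qed.

Lemma prod_if (R : comRingType) n (l0 : 'I_n) (x y : R) :
  \prod_(l < n) (if l == l0 then x else y) = x * y ^+ n.-1.
Proof.
rewrite (bigD1 l0) //= eqxx; congr (_ * _).
rewrite (eq_bigr (fun _ => y)); last by move=> l /negbTE ->.
by rewrite prodr_const cardC1 card_ord.
Qed.

Lemma sum_if (R : comRingType) n (l0 : 'I_n) :
  \sum_(l < n) (if l == l0 then 1 else 0 : R) = 1.
Proof.
rewrite (bigD1 l0) //= eqxx big1 ?addr0 //; by move=> l /negbTE ->.
Qed.

Lemma sum_ind (R : comRingType) (T : finType) (X : {set T}) :
  \sum_(j : T) ((j \in X)%:R : R) = #|X|%:R.
Proof.
rewrite -sum1_card natr_sum [RHS]big_mkcond; apply: eq_bigr => j _.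
by case: (j \in X).
Qed.

Lemma forall_imset (K I : finType) (f : I -> K) (F : pred K) :
  [forall (x | x \in (f @: [set: I])%SET), F x] = [forall l, F (f l)].
Proof.
apply/forall_inP/forallP.
  by move=> H l; apply: H; apply: imset_f; rewrite inE.
by move=> H x /imsetP[l _ ->].
Qed.

Lemma meas_forall_seq d (T : measurableType d) (K : eqType) (F : K -> set T)
  (l : seq K) : (forall k, measurable (F k)) ->
  measurable [set w | forall k, k \in l -> F k w].
Proof.
move=> mF; elim: l => [|k l IH].
  have -> : [set w | forall k, k \in [::] -> F k w] = setT.
    by apply/seteqP; split=> w //= _ k; rewrite in_nil.
  exact: measurableT.
have -> : [set w | forall k0, k0 \in k :: l -> F k0 w] =
  F k `&` [set w | forall k, k \in l -> F k w].
  apply/seteqP; split=> w /=.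
    by move=> H; split; [apply: H; rewrite inE eqxx | move=> k0 kl; apply: H; rewrite inE kl orbT].
  by case=> H1 H2 k0; rewrite inE => /orP[/eqP->//|]; exact: H2.
exact: measurableI.
Qed.

Lemma prod1B (R : comRingType) n (F G : 'I_n -> R) : (forall l, F l = G l) ->
  \prod_(l < n) (1 - F l) = \prod_(l < n) (1 - G l).
Proof. by move=> e; apply: eq_bigr => l _; rewrite e. Qed.
Arguments prod1B {R n F G}.

Section BigIf.
Context (R : comRingType) (n : nat) (F : 'I_n -> bool) (x y : R).

Lemma sum_false : (forall l, F l = false) -> \sum_(l < n) ((F l)%:R : R) = 0.
Proof. by move=> e; rewrite big1 // => l _; rewrite e. Qed.

Lemma sum_one l0 : (forall l, F l = (l == l0)) -> \sum_(l < n) ((F l)%:R : R) = 1.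
Proof.
move=> e; rewrite -[RHS](@sum_if R n l0); apply: eq_bigr => l _; rewrite e.
by case: (l == l0) => /=; rewrite ?mulr1n ?mulr0n.
Qed.

Lemma prod_false : (forall l, F l = false) ->
  \prod_(l < n) (if F l then x else y) = y ^+ n.
Proof. by move=> e; rewrite -prod_constI; apply: eq_bigr => l _; rewrite e. Qed.

Lemma prod_one l0 : (forall l, F l = (l == l0)) ->
  \prod_(l < n) (if F l then x else y) = x * y ^+ n.-1.
Proof. by move=> e; rewrite -(@prod_if R n l0 x y); apply: eq_bigr => l _; rewrite e. Qed.

Lemma prod1_false : (forall l, F l = false) ->
  \prod_(l < n) (1 - if F l then x else y) = (1 - y) ^+ n.
Proof. by move=> e; rewrite -prod_constI; apply: eq_bigr => l _; rewrite e. Qed.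

Lemma prod1_one l0 : (forall l, F l = (l == l0)) ->
  \prod_(l < n) (1 - if F l then x else y) = (1 - x) * (1 - y) ^+ n.-1.
Proof.
move=> e; rewrite -(@prod_if R n l0 (1-x) (1-y)); apply: eq_bigr => l _; rewrite e.
by case: (l == l0) => /=; rewrite ?mulr1n ?mulr0n.
Qed.
End BigIf.
Arguments sum_false {R n F}.
Arguments sum_one {R n F l0}.
Arguments prod_false {R n F x y}.
Arguments prod_one {R n F x y l0}.
Arguments prod1_false {R n F x y}.
Arguments prod1_one {R n F x y l0}.


Theorem proposition4
  (d : measure_display) (Omega : measurableType d) (R : realType)
  (P : probability Omega R)
  (N In Jn : nat) (L : finType)
  (Jset : {set 'I_N}) (Iset : L -> {set 'I_N})
  (eps : R)
  (i : Omega -> 'I_N) (That : L -> Omega -> {set 'I_N})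
  (h m : nat) (p : L) (q : 'I_h -> L) (r : 'I_m -> L) :
  (* N > T >= 1, T = I + J *)
  (1 <= In + Jn)%N -> (In + Jn < N)%N ->
  (* mixed support-set model *)
  #|Jset| = Jn ->
  (forall s, #|Iset s| = In) ->
  (forall s, Iset s :&: Jset = finset.set0) ->
  (forall s t, s != t -> Iset s :&: Iset t = finset.set0) ->
  (* measurability of the random objects *)
  (forall j, measurable [set w | i w = j]) ->
  (forall s (A : {set 'I_N}), measurable [set w | That s w = A]) ->
  (* system model *)
  0 <= eps -> eps <= (N%:R - (In + Jn)%:R) / N%:R ->
  (forall s j, j \in Iset s :|: Jset ->
     prob P [set w | j \in That s w] = 1 - eps) ->
  (forall s j, j \notin Iset s :|: Jset ->
     prob P [set w | j \in That s w] = (In + Jn)%:R / (N%:R - (In + Jn)%:R) * eps) ->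
  (forall j, mutually_independent P (fun s => [set w | j \in That s w])) ->
  (* i uniform on Omega and independent of all estimates *)
  (forall j, prob P [set w | i w = j] = 1 / N%:R) ->
  (forall j (f : L -> {set 'I_N}),
     prob P ([set w | i w = j] `&` [set w | forall s, That s w = f s])
     = prob P [set w | i w = j] * prob P [set w | forall s, That s w = f s]) ->
  (* the 1+h+m sensors are distinct *)
  injective q -> injective r ->
  (forall l, q l != p) -> (forall l, r l != p) -> (forall l k, q l != r k) ->
  let B := [set w | [/\ i w \in That p w,
                        forall l, i w \in That (q l) w
                      & forall l, i w \notin That (r l) w]] in
  0 < prob P B ->
  let phi := (In + Jn)%:R / (N%:R - (In + Jn)%:R) * eps in
  cond_prob P [set w | i w \in Iset p :|: Jset] B =
    ((1 - eps) ^+ h.+1 * eps ^+ m * (Jn%:R / N%:R)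
       + (1 - eps) * phi ^+ h * (1 - phi) ^+ m * (In%:R / N%:R))
    / ((1 - eps) ^+ h.+1 * eps ^+ m * (Jn%:R / N%:R)
       + h.+1%:R * (1 - eps) * phi ^+ h * (1 - phi) ^+ m * (In%:R / N%:R)
       + m%:R * eps * phi ^+ h.+1 * (1 - phi) ^+ m.-1 * (In%:R / N%:R)
       + phi ^+ h.+1 * (1 - phi) ^+ m
           * ((N%:R - Jn%:R - (m + h + 1)%:R * In%:R) / N%:R)).
Proof.
move=> H1 HN HJ HI HIJ HII hmi hmT he0 he1 hin hout hind hiu hii hq hr hqp hrp hqr
  B hB phi.
pose Z2 := fun w => [ffun s => That s w] : {ffun L -> {set 'I_N}}.
have Z2E : forall w s, Z2 w s = That s w by move=> w s; rewrite ffunE.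
have Z2at : forall f : {ffun L -> {set 'I_N}},
    [set w | Z2 w = f] = [set w | forall s, That s w = f s].
  move=> f; apply/funext=> w /=; apply/propext; split.
    by move=> <- s; rewrite Z2E.
  by move=> H; apply/ffunP=> s; rewrite Z2E.
have hZ2 : forall f, measurable [set w | Z2 w = f].
  move=> f; rewrite Z2at.
  have -> : [set w | forall s, That s w = f s] =
     [set w | forall s, s \in enum L -> That s w = f s].
    apply/funext=> w /=; apply/propext; split; first by move=> H s _.
    by move=> H s; apply: H; rewrite mem_enum.
  by apply: meas_forall_seq => s; exact: hmT.
pose Z := fun w => (i w, Z2 w).
have hZ : forall y, measurable [set w | Z w = y].
  move=> [j f].
  have -> : [set w | Z w = (j, f)] = [set w | i w = j] `&` [set w | Z2 w = f].
    apply/funext=> w /=; apply/propext; split; first by case=> -> ->.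
    by rewrite /Z; case=> -> ->.
  exact: measurableI.
have Zat : forall j f, prob P [set w | Z w = (j, f)] =
    N%:R^-1 * prob P [set w | Z2 w = f].
  move=> j f.
  have -> : [set w | Z w = (j, f)] = [set w | i w = j] `&` [set w | Z2 w = f].
    apply/funext=> w /=; apply/propext; split; first by case=> -> ->.
    by rewrite /Z; case=> -> ->.
  by rewrite Z2at hii hiu div1r.
pose cond := fun (j : 'I_N) (f : {ffun L -> {set 'I_N}}) =>
  [&& j \in f p, [forall l, j \in f (q l)] & [forall l, j \notin f (r l)]].
have sumD : forall D : pred 'I_N,
  prob P [set w | D (i w) && cond (i w) (Z2 w)] =
  \sum_(j | D j) (N%:R^-1 * prob P [set w | cond j (Z2 w)]).
  move=> D.
  have -> : [set w | D (i w) && cond (i w) (Z2 w)] =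
     [set w | (fun y => D y.1 && cond y.1 y.2) (Z w)] by [].
  rewrite (@prob_pred _ _ _ P _ _ hZ (fun y => D y.1 && cond y.1 y.2)).
  have e : forall j, prob P [set w | cond j (Z2 w)] =
     \sum_(f | cond j f) prob P [set w | Z2 w = f].
    by move=> j; exact: (@prob_pred _ _ _ P _ _ hZ2 (cond j)).
  rewrite [RHS](eq_bigr (fun j => \sum_(f | cond j f)
      N%:R^-1 * prob P [set w | Z2 w = f])); last by move=> j _; rewrite e mulr_sumr.
  rewrite pair_big_dep; apply: eq_bigr => -[j f] _ /=.
  exact: Zat.
pose v := fun s (j : 'I_N) => prob P [set w | j \in That s w].
have Cj : forall j, prob P [set w | cond j (Z2 w)] =
    v p j * \prod_(l < h) v (q l) j * \prod_(l < m) (1 - v (r l) j).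
  move=> j.
  pose Q := fun s (f : {ffun L -> {set 'I_N}}) => j \in f s.
  have hQ : forall s, prob P [set w | Q s (Z2 w)] = v s j.
    by move=> s; apply: prob_ext => w; rewrite /Q Z2E.
  have hind' : forall S : {set L},
      prob P [set w | [forall (k | k \in S), Q k (Z2 w)]] =
      \prod_(k in S) prob P [set w | Q k (Z2 w)].
    move=> S; rewrite (eq_bigr _ (fun s _ => hQ s)) /v -(hind j S).
    congr (prob P _); apply/funext=> w /=; apply/propext; split.
      by move/forall_inP=> H k kS; move: (H k kS); rewrite /Q Z2E.
    by move=> H; apply/forall_inP=> k kS; rewrite /Q Z2E; exact: H.
  pose S := (p |: (q @: [set: 'I_h]))%SET.
  pose T := (r @: [set: 'I_m])%SET.
  have pq : p \notin (q @: [set: 'I_h])%SET.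
    by apply/negP => /imsetP[l _ e]; move: (hqp l); rewrite -e eqxx.
  have dST : [disjoint S & T]%B.
    rewrite finset.disjoints_subset; apply/fintype.subsetP => x.
    rewrite !inE; case/orP=> [/eqP->|/imsetP[l _ ->]];
      apply/negP => /imsetP[k _ e].
      by move: (hrp k); rewrite -e eqxx.
    by move: (hqr l k); rewrite e eqxx.
  have := @indep_compl _ _ _ P _ _ hZ2 _ Q hind' #|T| S T erefl dST.
  have -> : prob P [set w | [forall (k | k \in S), Q k (Z2 w)] &&
                  [forall (k | k \in T), ~~ Q k (Z2 w)]] =
            prob P [set w | cond j (Z2 w)].
    apply: prob_ext => w.
    by rewrite /S forall_setU1 forall_imset /T forall_imset /cond /Q andbA.
  move=> ->.
  rewrite /S (big_setU1 _ pq) /= (big_imset _ (in2W hq)) /T (big_imset _ (in2W hr)) /=.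
  rewrite hQ (eq_bigl predT); last by move=> x; rewrite inE.
  rewrite [in X in _ * X](eq_bigl predT); last by move=> x; rewrite inE.
  by congr (_ * _ * _); apply: eq_bigr => l _; rewrite hQ.
have disjIJ : forall s j, j \in Iset s -> j \notin Jset.
  move=> s j js; apply/negP=> jJ; move: (HIJ s) => /setP/(_ j).
  by rewrite !inE js jJ.
have uniqI : forall s t j, j \in Iset s -> j \in Iset t -> s = t.
  move=> s t j js jt; apply/eqP; apply/negPn/negP => st.
  by move: (HII s t st) => /setP/(_ j); rewrite !inE js jt.
have vin : forall s j, j \in Jset -> v s j = 1 - eps.
  by move=> s j jJ; apply: hin; rewrite finset.in_setU jJ orbT.
have vout : forall s j, j \notin Jset -> v s j = if j \in Iset s then 1 - eps else phi.
  move=> s j jJ; case: ifP => js; first by apply: hin; rewrite finset.in_setU js.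
  by apply: hout; rewrite finset.in_setU js (negbTE jJ).
pose a := (1 - eps) * (1 - eps) ^+ h * eps ^+ m.
pose b := (1 - eps) * phi ^+ h * (1 - phi) ^+ m.
pose c := phi * phi ^+ h * (eps * (1 - phi) ^+ m.-1).
pose e := phi * phi ^+ h * (1 - phi) ^+ m.
have expP : forall n (y : R), (0 < n)%N -> y * y ^+ n.-1 = y ^+ n.
  by move=> [|n] y // _; rewrite exprS.
have claim : forall j,
  v p j * \prod_(l < h) v (q l) j * \prod_(l < m) (1 - v (r l) j) =
    a * (j \in Jset)%:R + b * (j \in Iset p)%:R
    + b * \sum_(l < h) (j \in Iset (q l))%:R
    + c * \sum_(l < m) (j \in Iset (r l))%:R
    + e * (1 - (j \in Jset)%:R - (j \in Iset p)%:R
           - \sum_(l < h) (j \in Iset (q l))%:R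
           - \sum_(l < m) (j \in Iset (r l))%:R) /\
  v p j * \prod_(l < h) v (q l) j * \prod_(l < m) (1 - v (r l) j)
    * (j \in Iset p :|: Jset)%:R = a * (j \in Jset)%:R + b * (j \in Iset p)%:R.
  move=> j; rewrite finset.in_setU.
  have nI : forall s, j \in Jset -> ((j \in Iset s)%:R : R) = 0.
    move=> s jJ; case js: (j \in Iset s) => //.
    by move: (disjIJ s j js); rewrite jJ.
  case jJ: (j \in Jset).
    rewrite (eq_bigr _ (fun l _ => vin (q l) j jJ)) (prod1B (fun l => vin (r l) j jJ)).
    rewrite (eq_bigr _ (fun l _ => nI (q l) jJ)) (eq_bigr _ (fun l _ => nI (r l) jJ)).
    rewrite nI // vin // !prod_constI !big1_eq orbT.
    rewrite /a (_ : 1 - (1 - eps) = eps); last by ring.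
    by split; rewrite /=; ring.
  have jJ' : j \notin Jset by rewrite jJ.
  rewrite (vout p j jJ') (eq_bigr _ (fun l _ => vout (q l) j jJ'))
    (prod1B (fun l => vout (r l) j jJ')) orbF.
  case jp: (j \in Iset p).
    have hq0 : forall l, (j \in Iset (q l)) = false.
      move=> l; apply/negbTE/negP => jq.
      by move: (hqp l); rewrite (uniqI _ _ _ jq jp) eqxx.
    have hr0 : forall l, (j \in Iset (r l)) = false.
      move=> l; apply/negbTE/negP => jr.
      by move: (hrp l); rewrite (uniqI _ _ _ jr jp) eqxx.
    rewrite (prod_false hq0) (prod1_false hr0) (sum_false hq0) (sum_false hr0).
    by split; rewrite /= /b; ring.
  case: (pickP (fun l => j \in Iset (q l))) => [l0 jq | nq].
    have hq1 : forall l, (j \in Iset (q l)) = (l == l0).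
      move=> l; apply/idP/eqP => [jql|->//]; exact: hq (uniqI _ _ _ jql jq).
    have hr0 : forall l, (j \in Iset (r l)) = false.
      move=> l; apply/negbTE/negP => jr.
      by move: (hqr l0 l); rewrite (uniqI _ _ _ jr jq) eqxx.
    rewrite (prod_one hq1) (prod1_false hr0) (sum_one hq1) (sum_false hr0).
    have hpos : (0 < h)%N by apply: leq_ltn_trans (leq0n l0) (ltn_ord l0).
    rewrite /b /e /c -(expP h phi hpos).
    by split; rewrite /=; ring.
  have hq0 : forall l, (j \in Iset (q l)) = false := nq.
  case: (pickP (fun l => j \in Iset (r l))) => [l0 jr | nr].
    have hr1 : forall l, (j \in Iset (r l)) = (l == l0).
      move=> l; apply/idP/eqP => [jrl|->//]; exact: hr (uniqI _ _ _ jrl jr).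
    rewrite (prod_false hq0) (prod1_one hr1) (sum_false hq0) (sum_one hr1).
    have hpos : (0 < m)%N by apply: leq_ltn_trans (leq0n l0) (ltn_ord l0).
    rewrite /b /e /c -(expP m (1 - phi) hpos).
    rewrite (_ : 1 - (1 - eps) = eps); last by ring.
    by split; rewrite /=; ring.
  have hr0 : forall l, (j \in Iset (r l)) = false := nr.
  rewrite (prod_false hq0) (prod1_false hr0) (sum_false hq0) (sum_false hr0).
  by split; rewrite /= /e; ring.
have PB : prob P B = \sum_j (N%:R^-1 * prob P [set w | cond j (Z2 w)]).
  rewrite -(sumD (fun _ => true)); congr (prob P _).
  apply/funext=> w; apply/propext; rewrite /B /=; split.
    case=> h1 h2 h3; rewrite /cond Z2E h1 /=; apply/andP; split;
      apply/forallP=> l; rewrite Z2E; [exact: h2|exact: h3].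
  rewrite /cond Z2E => /and3P[h1 /forallP h2 /forallP h3].
  by split => // l; [move: (h2 l) | move: (h3 l)]; rewrite Z2E.
have PAB : prob P ([set w | i w \in Iset p :|: Jset] `&` B) =
    \sum_(j | j \in Iset p :|: Jset) (N%:R^-1 * prob P [set w | cond j (Z2 w)]).
  rewrite -(sumD (fun j => j \in Iset p :|: Jset)); congr (prob P _).
  apply/funext=> w; apply/propext; rewrite /B /=; split.
    case=> h0 [h1 h2 h3]; rewrite /cond Z2E h0 h1 /=; apply/andP; split;
      apply/forallP=> l; rewrite Z2E; [exact: h2|exact: h3].
  rewrite /cond Z2E => /andP[h0 /and3P[h1 /forallP h2 /forallP h3]].
  by split => //; split => // l; [move: (h2 l) | move: (h3 l)]; rewrite Z2E.
have sq : forall n (t : 'I_n -> L),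
    \sum_j \sum_(l < n) ((j \in Iset (t l))%:R : R) = (In%:R *+ n).
  move=> n t; rewrite exchange_big /=.
  rewrite (eq_bigr (fun _ => In%:R)); last by move=> l _; rewrite sum_ind HI.
  by rewrite sumr_const card_ord.
rewrite /cond_prob PAB PB big_mkcond /=.
rewrite (eq_bigr (fun j => N%:R^-1 * (prob P [set w | cond j (Z2 w)] *
   (j \in Iset p :|: Jset)%:R))); last first.
  by move=> j _; case: (j \in Iset p :|: Jset); rewrite /= ?mulr1 ?mulr0.
under eq_bigr => j _ do rewrite Cj (claim j).2.
pose comb := fun j : 'I_N => a * (j \in Jset)%:R + b * (j \in Iset p)%:R
    + b * \sum_(l < h) (j \in Iset (q l))%:R
    + c * \sum_(l < m) (j \in Iset (r l))%:R
    + e * (1 - (j \in Jset)%:R - (j \in Iset p)%:R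
           - \sum_(l < h) (j \in Iset (q l))%:R
           - \sum_(l < m) (j \in Iset (r l))%:R).
rewrite [X in _ / X = _](eq_bigr (fun j => N%:R^-1 * comb j)); last first.
  by move=> j _; rewrite Cj (claim j).1.
rewrite /comb.
rewrite -!mulr_sumr !big_split /= -!mulr_sumr !sumrB !sum_ind !sq HJ HI.
rewrite sumr_const card_ord -!(mulr_natr (In%:R)).
rewrite /a /b /c /e !exprS.
clearbody phi.
congr (_ / _).
  ring.
rewrite !natrD; ring.
Qed.
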